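(* Let $c_2,c_3$ be constants and $\mu(t)=t^2+c_2t+c_3$. Let $\{P_n\}_{n\ge0}$ be a sequence of monic orthogonal polynomials in the lattice $\mu(t)$ with three-term recurrence relation $\mu(t)P_n=P_{n+1}+\beta_nP_n+\gamma_nP_{n-1}$ ($P_{-1}=0$, $P_0=1$, $\gamma_n\ne0$). Let $L$ be the infinite tridiagonal matrix with $L_{n,n}=\beta_n$, $L_{n,n+1}=1$, $L_{n,n-1}=\gamma_n$, and let $M$ be the infinite tridiagonal matrix with $M_{n,n}=\beta'_n$, $M_{n,n+1}=1$, $M_{n,n-1}=\gamma'_n$, where $\beta'_n,\gamma'_n$ are the three-term recurrence coefficients of the sequence of divided differences, $\mu(t)Q_n=Q_{n+1}+\beta'_nQ_n+\gamma'_nQ_{n-1}$ with $Q_n=P'_{n+1}$. Let $D$ be the infinite matrix with $D_{n+1,n}=n+1$ ($n\ge0$) and all other entries zero. Then $\{P_n\}$ is a sequence of classical orthogonal polynomials on the quadratic lattice $\mu(t)$ if and only if $$L^2D-2LDM+DM^2-\frac12\,(LD+DM)+\Big(c_3+\frac1{16}-\frac{c_2^2}{4}\Big)D=0 .$$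
   Context: The divided-difference operator is $\mathbb{D}f(t)=\frac{f(t+1/2)-f(t-1/2)}{\mu(t+1/2)-\mu(t-1/2)}$; it maps polynomials of degree $n$ in $\mu(t)$ to polynomials of degree $n-1$ in $\mu(t)$. A sequence of monic polynomials $\{R_n\}$ in $\mu(t)$ ($\deg R_n=n$) is orthogonal if it satisfies $\mu(t)R_n=R_{n+1}+b_nR_n+c_nR_{n-1}$, $R_{-1}=0$, $R_0=1$, with $c_n\neq0$. Set $P'_n=\frac1n\mathbb{D}P_n$ for $n\ge1$. The sequence $\{P_n\}$ is called classical if $\{P'_n\}_{n\ge1}$ is also a sequence of monic orthogonal polynomials in $\mu(t)$. Indices of infinite matrices start at $0$; products of these banded infinite matrices are well defined. *)

(* Defs.v *)
From HB Require Import structures.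
From mathcomp Require Import all_boot all_order all_algebra.
Set Implicit Arguments. Unset Strict Implicit. Unset Printing Implicit Defensive.
Import Order.TTheory GRing.Theory Num.Theory.
Local Open Scope ring_scope.

Section Defs.
Variable R : numFieldType.

(* Polynomials "in mu(t)" are represented by polynomials p in a variable x;
   the actual function of t is p \Po mu, where mu is the polynomial in t
   below. *)
Definition mu (c2 c3 : R) : {poly R} := 'X^2 + c2 *: 'X + c3%:P.

Definition tshift (a : R) (f : {poly R}) : {poly R} := f \Po ('X + a%:P).

(* DDrel c2 c3 p q  <->  DD (p(mu(t))) = q(mu(t)), where
   DD f(t) = (f(t+1/2) - f(t-1/2)) / (mu(t+1/2) - mu(t-1/2)),
   written without division (the denominator 2t + c2 is a nonzero polynomial). *)
Definition DDrel (c2 c3 : R) (p q : {poly R}) : Prop :=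
  (q \Po mu c2 c3) * (tshift (1/2) (mu c2 c3) - tshift (-(1/2)) (mu c2 c3))
  = tshift (1/2) (p \Po mu c2 c3) - tshift (-(1/2)) (p \Po mu c2 c3).

Definition prev (p : nat -> {poly R}) (n : nat) : {poly R} :=
  if n is m.+1 then p m else 0.

Definition ttrr (p : nat -> {poly R}) (b c : nat -> R) : Prop :=
  forall n, 'X * p n = p n.+1 + b n *: p n + c n *: prev p n.

Definition monic_orth_with (p : nat -> {poly R}) (b c : nat -> R) : Prop :=
  [/\ p 0 = 1, (forall n, p n \is monic /\ size (p n) = n.+1),
      ttrr p b c & (forall n, (0 < n)%N -> c n != 0)].

Definition monic_orth (p : nat -> {poly R}) : Prop :=
  exists b c, monic_orth_with p b c.

(* {P_n} is classical: the sequence Q_n = P'_{n+1} = (1/(n+1)) DD P_{n+1}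
   (n >= 0) is again monic orthogonal. *)
Definition classical (c2 c3 : R) (P : nat -> {poly R}) : Prop :=
  exists Q : nat -> {poly R},
    (forall n, DDrel c2 c3 (P n.+1) (n.+1%:R *: Q n)) /\ monic_orth Q.

Definition imat := nat -> nat -> R.

(* Product of infinite matrices A * B, for a left factor A with
   A i k = 0 whenever k > i + 2 (upper bandwidth <= 2); then the sum
   \sum_k A i k * B k j is finite and equals the sum below.  All the left
   factors used in the theorem (L, L*L, L*D, D, D*M) have this property. *)
Definition imul (A B : imat) : imat :=
  fun i j => \sum_(k < i.+3) A i k * B k j.

Definition iadd (A B : imat) : imat := fun i j => A i j + B i j.
Definition iscale (a : R) (A : imat) : imat := fun i j => a * A i j.

Definition jacobi (b c : nat -> R) : imat :=
  fun i j => if j == i then b i else if j == i.+1 then 1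
             else if i == j.+1 then c i else 0.

Definition Dmat : imat := fun i j => if i == j.+1 then i%:R else 0.

Definition main_expr (c2 c3 : R) (L M : imat) : imat :=
  iadd (imul (imul L L) Dmat)
  (iadd (iscale (-2) (imul (imul L Dmat) M))
  (iadd (imul (imul Dmat M) M)
  (iadd (iscale (-(1/2)) (iadd (imul L Dmat) (imul Dmat M)))
        (iscale (c3 + 1/16 - c2^+2/4) Dmat)))).

End Defs.

(* Main.v *)
Require Import Defs.
From HB Require Import structures.
From mathcomp Require Import all_boot all_order all_algebra.
From mathcomp Require Import ring zify.
Import Order.TTheory GRing.Theory Num.Theory.
Local Open Scope ring_scope.
Set Implicit Arguments. Unset Strict Implicit. Unset Printing Implicit Defensive.


Section Mat.
Variable R : numFieldType.

Definition iapply (A : imat R) (v : nat -> {poly R}) (i : nat) : {poly R} :=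
  \sum_(k < i.+3) (A i k)%:P * v k.

Definition band (A : imat R) (a : nat) := forall i k, (i + a < k)%N -> A i k = 0.

Lemma sum_trunc (f : nat -> {poly R}) M N :
  (forall j, (M <= j)%N -> f j = 0) -> (M <= N)%N ->
  \sum_(j < N) f j = \sum_(j < M) f j.
Proof.
move=> f0 MN; symmetry; rewrite (big_ord_widen N f MN) [RHS]big_mkcond /=.
rewrite big_mkcond /=; apply: eq_bigr => j _; case: ifP => // /negbT; rewrite -leqNgt => /f0 ->//.
Qed.

Lemma iapply_mul (A B : imat R) a b v i :
  band A a -> band B b -> (a + b <= 2)%N ->
  iapply (imul A B) v i = iapply A (iapply B v) i.
Proof.
move=> bA bB ab; rewrite /iapply /imul.
under eq_bigr => j _ do rewrite rmorph_sum mulr_suml.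
rewrite exchange_big /=; apply: eq_bigr => k _.
under eq_bigr => j _ do rewrite polyCM -mulrA.
rewrite -mulr_sumr.
have [lt|le] := ltnP (i + a) k; first by rewrite bA // polyC0 !mul0r.
congr (_ * _).
rewrite (@sum_trunc (fun j => (B k j)%:P * v j) (k + b).+1 i.+3); last 2 first.
- by move=> j hj; rewrite bB ?polyC0 ?mul0r //; lia.
- lia.
rewrite (@sum_trunc (fun j => (B k j)%:P * v j) (k + b).+1 k.+3) //.
- by move=> j hj; rewrite bB ?polyC0 ?mul0r //; lia.
- lia.
Qed.

Lemma band_mul (A B : imat R) a b : band A a -> band B b -> band (imul A B) (a + b).
Proof.
move=> bA bB i j h; rewrite /imul big1 // => k _.
have [lt|le] := ltnP (i + a) k; first by rewrite bA // mul0r.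
by rewrite bB ?mulr0 //; lia.
Qed.

Lemma band_add (A B : imat R) a : band A a -> band B a -> band (iadd A B) a.
Proof. by move=> bA bB i j h; rewrite /iadd bA ?bB ?addr0. Qed.

Lemma band_scale (A : imat R) c a : band A a -> band (iscale c A) a.
Proof. by move=> bA i j h; rewrite /iscale bA ?mulr0. Qed.

Lemma band_weak (A : imat R) a b : (a <= b)%N -> band A a -> band A b.
Proof. by move=> ab bA i j h; rewrite bA //; lia. Qed.

Lemma band_jacobi b c : band (jacobi b c) 1.
Proof.
move=> i k h; rewrite /jacobi; case: eqP => [?|_]; first lia.
case: eqP => [?|_]; first lia. case: eqP => [?|_] //; lia.
Qed.

Lemma band_D : band (@Dmat R) 0.
Proof. move=> i k h; rewrite /Dmat; case: eqP => [?|_] //; lia. Qed.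

Lemma iapply_add A B v i : iapply (iadd A B) v i = iapply A v i + iapply B v i.
Proof. by rewrite /iapply -big_split; apply: eq_bigr => k _; rewrite /iadd polyCD mulrDl. Qed.

Lemma iapply_scale c A v i : iapply (iscale c A) v i = c%:P * iapply A v i.
Proof. by rewrite /iapply mulr_sumr; apply: eq_bigr => k _; rewrite /iscale polyCM mulrA. Qed.

Lemma iapply_jacobi b c v i :
  iapply (jacobi b c) v i = v i.+1 + (b i)%:P * v i + (c i)%:P * Defs.prev v i.
Proof.
rewrite /iapply.
have H : forall k, (jacobi b c i k)%:P * v k =
   (if k == i.+1 then v k else 0) + (if k == i then (b i)%:P * v k else 0)
   + (if i == k.+1 then (c i)%:P * v k else 0).
  move=> k; rewrite /jacobi.
  case: eqP => h1; case: eqP => h2; case: eqP => h3;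
  rewrite ?polyC0 ?polyC1 ?mul0r ?mul1r ?add0r ?addr0 //; exfalso; lia.
under eq_bigr => k _ do rewrite H.
rewrite !big_split /= -!big_mkcond /=.
rewrite big_ord1_eq (big_ord1_eq _ (fun j => (b i)%:P * v j)) !ltnS leqnSn ltnW ?leqnSn //.
congr (_ + _).
clear H; case: i => [|i] /=; first by rewrite big_pred0 ?mulr0.
rewrite (eq_bigl (fun k : 'I_ _ => k == i :> nat)); last by move=> k /=; rewrite eqSS eq_sym.
rewrite (big_ord1_eq _ (fun j => (c i.+1)%:P * v j)); case: ifP => //; lia.
Qed.
End Mat.


Section Mat2.
Variable R : numFieldType.

Lemma iapply_D (v : nat -> {poly R}) i : iapply (@Dmat R) v i = (i%:R)%:P * Defs.prev v i.
Proof.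
rewrite /iapply /Dmat.
under eq_bigr => k _ do rewrite (fun_if (fun x => x%:P)) polyC0 (fun_if (fun x => x * v k)) mul0r.
rewrite -big_mkcond /=.
case: i => [|i] /=; first by rewrite big_pred0 ?mulr0.
rewrite (eq_bigl (fun k : 'I_ _ => k == i :> nat)); last by move=> k /=; rewrite eqSS eq_sym.
rewrite (big_ord1_eq _ (fun j => (i.+1%:R)%:P * v j)); case: ifP => //; lia.
Qed.

Lemma imul_col (A B : imat R) i j : (imul A B i j)%:P = iapply A (fun k => (B k j)%:P) i.
Proof. by rewrite /imul /iapply rmorph_sum; apply: eq_bigr => k _; rewrite rmorphM. Qed.

Lemma imul_assoc (A B C : imat R) a b i j :
  band A a -> band B b -> (a + b <= 2)%N ->
  imul (imul A B) C i j = imul A (imul B C) i j.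
Proof.
move=> bA bB ab; apply: (@polyC_inj R).
rewrite imul_col (iapply_mul _ _ bA bB ab) imul_col /iapply.
by apply: eq_bigr => k _; rewrite imul_col.
Qed.

Lemma imul_jl b c (B : imat R) i j :
  imul (jacobi b c) B i j = B i.+1 j + b i * B i j + c i * (if i is i'.+1 then B i' j else 0).
Proof.
apply: (@polyC_inj R); rewrite imul_col iapply_jacobi.
by case: i => [|i] /=; rewrite !rmorphD !rmorphM //= ?mulr0 ?polyC0.
Qed.

Lemma imul_dl (B : imat R) i j :
  imul (@Dmat R) B i j = i%:R * (if i is i'.+1 then B i' j else 0).
Proof.
apply: (@polyC_inj R); rewrite imul_col iapply_D.
by case: i => [|i] /=; rewrite !rmorphM //= ?mulr0 ?polyC0.
Qed.

Lemma lin_indep (Q : nat -> {poly R}) (a : nat -> R) N :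
  (forall k, size (Q k) = k.+1) ->
  \sum_(k < N) a k *: Q k = 0 -> forall k, (k < N)%N -> a k = 0.
Proof.
move=> sQ; elim: N => [|N IH] S k hk; first by [].
have sz : forall M, (size (\sum_(k < M) a k *: Q k)%R <= M)%N.
  elim=> [|M IHM]; first by rewrite big_ord0 size_poly0.
  rewrite big_ord_recr /=; apply: leq_trans (size_polyD _ _) _.
  rewrite geq_max; apply/andP; split; first by apply: leq_trans IHM _.
  by apply: leq_trans (size_scale_leq _ _) _; rewrite sQ.
move: S; rewrite big_ord_recr /= => S.
have aN : a N = 0.
  apply/eqP; apply/negPn/negP => aN.
  have : size ((\sum_(k < N) a k *: Q k) + a N *: Q N) = N.+1.
    rewrite addrC size_polyDl; first by rewrite size_scale // sQ.
    by rewrite size_scale // sQ ltnS sz.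
  by rewrite S size_poly0.
move: S; rewrite aN scale0r addr0 => S.
case: (ltngtP k N) => [kN|//|->//]; first exact: IH.
lia.
Qed.
End Mat2.


Lemma entry_low (R : numFieldType) (c2 c3 : R) b g b' g' m :
  main_expr c2 c3 (jacobi b g) (jacobi b' g') m.+3 m =
  m.+1%:R * g m.+3 * g m.+2 - 2 * m.+2%:R * g m.+3 * g' m.+1
  + m.+3%:R * g' m.+2 * g' m.+1.
Proof.
rewrite /main_expr /iadd /iscale.
rewrite (imul_assoc _ _ _ (band_jacobi b g) (band_jacobi b g)) //.
rewrite (imul_assoc _ _ _ (band_jacobi b g) (@band_D R)) //.
rewrite (imul_assoc _ _ _ (@band_D R) (band_jacobi b' g')) //.
rewrite ?imul_jl ?imul_dl /=.
rewrite ?imul_jl ?imul_dl /=.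
rewrite /jacobi /Dmat.
repeat (case: eqP => ?; try (exfalso; lia)).
ring.
Qed.


Section Poly.
Variable R : numFieldType.
Variables (c2 c3 : R).

Let m := mu c2 c3.
Let h : {poly R} := (1/2 : R)%:P.
Let del : {poly R} := 2 * 'X + c2%:P.

Lemma h2 : 2 * h = 1.
Proof.
rewrite /h -[2]/(2%:R) -polyC_natr -polyCM; congr (_%:P).
by rewrite mul1r divff // pnatr_eq0.
Qed.

Lemma shift_mu (a : R) : tshift a m = m + a%:P ^+ 2 + a%:P * del.
Proof.
rewrite /tshift /m /mu /del !comp_polyD comp_polyZ comp_Xn_poly comp_polyX comp_polyC.
rewrite -!mul_polyC; ring.
Qed.

Lemma shift_diff : tshift (1/2) m - tshift (-(1/2)) m = del.
Proof.
rewrite !shift_mu polyCN -/h.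
apply: (etrans (y := 2 * h * del)); first ring.
by rewrite h2 mul1r.
Qed.

Lemma del_neq0 : del != 0.
Proof.
apply/eqP => /(congr1 (fun p : {poly R} => p`_1)).
rewrite /del coefD coefC /= coef0 addr0 -[2]/(2%:R) -polyC_natr coefCM coefX /= mulr1.
by move/eqP; rewrite pnatr_eq0.
Qed.

Lemma del_sq : del ^+ 2 = 4 * m - 4 * c3%:P + c2%:P ^+ 2.
Proof. rewrite /del /m /mu -mul_polyC; ring. Qed.

Lemma size_mu : size m = 3.
Proof.
rewrite /m /mu -addrA size_polyDl size_polyXn //.
apply: leq_ltn_trans (size_polyD _ _) _; rewrite gtn_max.
apply/andP; split; last by apply: leq_ltn_trans (size_polyC_leq1 _) _.
by apply: leq_ltn_trans (size_scale_leq _ _) _; rewrite size_polyX.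
Qed.


Definition Lv (b c : nat -> R) (v : nat -> {poly R}) n :=
  v n.+1 + (b n)%:P * v n + (c n)%:P * Defs.prev v n.

Lemma prevD (f g : nat -> {poly R}) n :
  Defs.prev (fun k => f k + g k) n = Defs.prev f n + Defs.prev g n.
Proof. by case: n => //=; rewrite addr0. Qed.
Lemma prevB (f g : nat -> {poly R}) n :
  Defs.prev (fun k => f k - g k) n = Defs.prev f n - Defs.prev g n.
Proof. by case: n => //=; rewrite subr0. Qed.
Lemma prevM r (f : nat -> {poly R}) n :
  Defs.prev (fun k => r * f k) n = r * Defs.prev f n.
Proof. by case: n => //=; rewrite mulr0. Qed.
Lemma prev_comp (f : nat -> {poly R}) r n :
  Defs.prev f n \Po r = Defs.prev (fun k => f k \Po r) n.
Proof. by case: n => //=; rewrite comp_poly0. Qed.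

Lemma LvD b c f g n : Lv b c (fun k => f k + g k) n = Lv b c f n + Lv b c g n.
Proof. rewrite /Lv prevD; ring. Qed.
Lemma LvB b c f g n : Lv b c (fun k => f k - g k) n = Lv b c f n - Lv b c g n.
Proof. rewrite /Lv prevB; ring. Qed.
Lemma LvM b c r f n : Lv b c (fun k => r * f k) n = r * Lv b c f n.
Proof. rewrite /Lv prevM; ring. Qed.
Lemma Lv_comp b c f r n : Lv b c f n \Po r = Lv b c (fun k => f k \Po r) n.
Proof. by rewrite /Lv !comp_polyD !comp_polyM !comp_polyC prev_comp. Qed.

Lemma ttrr_Lv f b c : ttrr f b c -> forall n, 'X * f n = Lv b c f n.
Proof. by move=> H n; rewrite H /Lv -!mul_polyC. Qed.

Lemma rec_comp f b c r : ttrr f b c -> forall n, r * (f n \Po r) = Lv b c (fun k => f k \Po r) n.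
Proof.
move=> H n; have := congr1 (fun x => x \Po r) (ttrr_Lv H n).
by rewrite /= comp_polyM comp_polyX Lv_comp.
Qed.

Lemma Lv_ext b c (f g : nat -> {poly R}) n : (forall k, f k = g k) -> Lv b c f n = Lv b c g n.
Proof. by move=> e; rewrite /Lv !e; case: n => //= n; rewrite e. Qed.

Lemma iapply_M (A : imat R) r v i : iapply A (fun k => r * v k) i = r * iapply A v i.
Proof. by rewrite /iapply mulr_sumr; apply: eq_bigr => k _; rewrite mulrCA. Qed.

Lemma iapply_addv (A : imat R) v w i : iapply A (fun k => v k + w k) i = iapply A v i + iapply A w i.
Proof. by rewrite /iapply -big_split; apply: eq_bigr => k _; rewrite mulrDr. Qed.

Lemma iapply_ext (A : imat R) v w i : v =1 w -> iapply A v i = iapply A w i.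
Proof. by move=> e; rewrite /iapply; apply: eq_bigr => k _; rewrite e. Qed.

Variables P Q : nat -> {poly R}.
Variables beta gamma beta' gamma' : nat -> R.
Hypothesis hP : monic_orth_with P beta gamma.
Hypothesis hDD : forall n, DDrel c2 c3 (P n.+1) (n.+1%:R *: Q n).
Hypothesis hQ : ttrr Q beta' gamma'.

Let p n := P n \Po m.
Let q n := Q n \Po m.
Let tp a n := tshift a (p n).
Let dq n := (n%:R)%:P * Defs.prev q n.

Lemma shift_rec a n : tshift a m * tp a n = Lv beta gamma (tp a) n.
Proof.
have [_ _ tP _] := hP.
have := congr1 (tshift a) (rec_comp m tP n).
by rewrite /tshift comp_polyM Lv_comp.
Qed.

Lemma dp_eq n : tp (1/2) n - tp (-(1/2)) n = del * dq n.
Proof.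
have [P0 _ _ _] := hP.
case: n => [|n].
  by rewrite /dq /= mulr0 /tp /p P0 (comp_poly_multiplicative m).2 /tshift (comp_poly_multiplicative _).2 (comp_poly_multiplicative _).2 subrr mulr0.
have := hDD n; rewrite /DDrel -/m shift_diff /tp /p => <-.
by rewrite /dq /= comp_polyZ -mul_polyC mulrC mulrA.
Qed.


Let s n := h * (tp (1/2) n + tp (-(1/2)) n).

Lemma e_sol a n : tp a n.+1 = tshift a m * tp a n - (beta n)%:P * tp a n
   - (gamma n)%:P * Defs.prev (tp a) n.
Proof. rewrite shift_rec /Lv; ring. Qed.

Lemma I_eq n : s n = Lv beta gamma dq n - (m + h ^+ 2) * dq n.
Proof.
apply: (mulfI del_neq0).
rewrite mulrBr [del * (_ * dq n)]mulrCA -(dp_eq n) -LvM.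
rewrite (@Lv_ext _ _ (fun k => del * dq k) (fun k => tp (1/2) k - tp (-(1/2)) k)); last by move=> k; rewrite dp_eq.
rewrite LvB /Lv !e_sol !shift_mu polyCN -/h /s; ring.
Qed.

Lemma II_eq n : (m + h ^+ 2) * s n + h ^+ 2 * (4 * m - 4 * c3%:P + c2%:P ^+ 2) * dq n
   = Lv beta gamma s n.
Proof.
rewrite /s LvM LvD /Lv !e_sol !shift_mu polyCN -/h -del_sq.
have t1 : tp (1/2) n = tp (-(1/2)) n + del * dq n by rewrite -dp_eq; ring.
rewrite t1; ring.
Qed.


Lemma E_apply n :
  iapply (main_expr c2 c3 (jacobi beta gamma) (jacobi beta' gamma')) q n = 0.
Proof.
set L := jacobi beta gamma; set M := jacobi beta' gamma'.
have bL : band L 1 by apply: band_jacobi.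
have bM : band M 1 by apply: band_jacobi.
have bD := @band_D R.
have LvE : forall b c v k, iapply (jacobi b c) v k = Lv b c v k.
  by move=> *; rewrite iapply_jacobi.
have vD : forall k, iapply (@Dmat R) q k = dq k by move=> k; rewrite iapply_D.
have vM : forall k, iapply M q k = m * q k.
  by move=> k; rewrite LvE (rec_comp m hQ k).
have vLD : forall k, iapply L dq k = s k + (m + h ^+ 2) * dq k.
  by move=> k; rewrite LvE I_eq; ring.
have t6 := vD n.
have t5 : iapply (imul (@Dmat R) M) q n = m * dq n.
  rewrite (iapply_mul _ _ bD bM) // (iapply_ext _ _ vM) iapply_M vD //.
have t4 : iapply (imul L (@Dmat R)) q n = s n + (m + h ^+ 2) * dq n.
  by rewrite (iapply_mul _ _ bL bD) // (iapply_ext _ _ vD) vLD.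
have t3 : iapply (imul (imul (@Dmat R) M) M) q n = m * (m * dq n).
  by rewrite (iapply_mul _ _ (band_mul bD bM) bM) // (iapply_ext _ _ vM) (iapply_M _ m q) t5.
have t2 : iapply (imul (imul L (@Dmat R)) M) q n = m * (s n + (m + h ^+ 2) * dq n).
  by rewrite (iapply_mul _ _ (band_mul bL bD) bM) // (iapply_ext _ _ vM) (iapply_M _ m q) t4.
have t1 : iapply (imul (imul L L) (@Dmat R)) q n =
    (m + h ^+ 2) * s n + h ^+ 2 * (4 * m - 4 * c3%:P + c2%:P ^+ 2) * dq n
    + (m + h ^+ 2) * (s n + (m + h ^+ 2) * dq n).
  rewrite (iapply_mul _ _ (band_mul bL bL) bD) // (iapply_ext _ _ vD).
  rewrite (iapply_mul _ _ bL bL) // (iapply_ext _ _ vLD) iapply_addv iapply_M.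
  by rewrite vLD LvE -II_eq.
rewrite /main_expr !(iapply_add, iapply_scale) t1 t2 t3 t4 t5 t6.
have c1 : (-2 : R)%:P = - 2 by rewrite polyCN polyC_natr.
have c5 : (-(1/2) : R)%:P = - h by rewrite polyCN.
have c6 : (c3 + 1/16 - c2 ^+ 2 / 4)%:P = c3%:P + h ^+ 4 - c2%:P ^+ 2 * h ^+ 2.
  have -> : c3 + 1/16 - c2 ^+ 2 / 4 = c3 + (1/2) ^+ 4 - c2 ^+ 2 * (1/2) ^+ 2.
    by field; rewrite ?pnatr_eq0.
  by rewrite /h -!rmorphXn -rmorphM -rmorphD -rmorphB.
rewrite c1 c5 c6.
apply: (etrans (y := (2 * h - 1) * (h * s n + (2 * h * m - c3%:P * (2 * h + 1) + h ^+ 3) * dq n))).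
  ring.
by rewrite h2 subrr mul0r.
Qed.


Lemma step_monic (A B : {poly R}) k :
  A \is monic -> size A = k.+1 -> (size B <= k.+1)%N ->
  ('X * A - B \is monic) /\ size ('X * A - B) = k.+2.
Proof.
move=> mA sA sB.
have sXA : size ('X * A) = k.+2 by rewrite mulrC size_mulX ?monic_neq0 // sA.
have lt : (size (- B)%R < size ('X * A)%R)%N by rewrite size_polyN sXA ltnS.
split; last by rewrite size_polyDl.
by rewrite monicE lead_coefDl // -monicE monicMl // monicX.
Qed.

Lemma Q0 : Q 0 = 1.
Proof.
have [P0 _ tP _] := hP.
have P1 : P 1 = 'X - (beta 0)%:P.
  have := tP 0; rewrite P0 /= mulr1 scaler0 addr0 -mul_polyC mulr1 => ->; ring.
have := dp_eq 1; rewrite /tp /p P1 /dq /= comp_polyB comp_polyX comp_polyC.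
rewrite /tshift !comp_polyB !comp_polyC -!/(tshift _ _).
have -> : tshift (1 / 2) m - (beta 0)%:P - (tshift (- (1 / 2)) m - (beta 0)%:P) =
  tshift (1 / 2) m - tshift (- (1 / 2)) m by ring.
rewrite shift_diff mul1r -{1}[del]mulr1 => /(mulfI del_neq0) /esym /eqP.
rewrite -subr_eq0 -[X in _ - X](comp_poly_multiplicative m).2 -comp_polyB.
by rewrite comp_poly_eq0 ?size_mu // subr_eq0 => /eqP.
Qed.

Lemma Qsize n : Q n \is monic /\ size (Q n) = n.+1.
Proof.
have main : forall n, (Q n \is monic /\ size (Q n) = n.+1) /\
                      (Q n.+1 \is monic /\ size (Q n.+1) = n.+2).
  clear n; elim=> [|n [[m1 s1] [m2 s2]]].
    have e : Q 1 = 'X * Q 0 - ((beta' 0) *: Q 0) by rewrite (hQ 0) /=; rewrite scaler0; ring.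
    rewrite Q0 monic1 size_poly1; split => //.
    rewrite e Q0; apply: step_monic; rewrite ?monic1 ?size_poly1 //.
    by apply: leq_trans (size_scale_leq _ _) _; rewrite size_poly1.
  split => //.
  have e : Q n.+2 = 'X * Q n.+1 - ((beta' n.+1) *: Q n.+1 + gamma' n.+1 *: Q n).
    by rewrite (hQ n.+1) /=; ring.
  rewrite e; apply: step_monic => //.
  apply: leq_trans (size_polyD _ _) _; rewrite geq_max.
  apply/andP; split; apply: leq_trans (size_scale_leq _ _) _; rewrite ?s1 ?s2 //.
by case: (main n).
Qed.

Lemma Eall i j : main_expr c2 c3 (jacobi beta gamma) (jacobi beta' gamma') i j = 0.
Proof.
set E := main_expr c2 c3 _ _.
have bL := band_jacobi beta gamma; have bM := band_jacobi beta' gamma'.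
have bD := @band_D R.
have bE : band E 2.
  apply: band_add; first exact: (band_mul (band_mul bL bL) bD).
  apply: band_add; first exact/band_scale/(band_mul (band_mul bL bD) bM).
  apply: band_add; first exact: (band_mul (band_mul bD bM) bM).
  apply: band_add; last exact/band_scale/(band_weak _ bD).
  apply/band_scale/band_add; first exact: (band_weak _ (band_mul bL bD)).
  exact: (band_weak _ (band_mul bD bM)).
case: (ltnP j i.+3) => hj; last by apply: bE; lia.
have := E_apply i; rewrite /iapply.
have -> : \sum_(k < i.+3) (E i k)%:P * q k = (\sum_(k < i.+3) E i k *: Q k) \Po m.
  by rewrite raddf_sum; apply: eq_bigr => k _; rewrite /= comp_polyZ -mul_polyC.
move/eqP; rewrite comp_poly_eq0 ?size_mu // => /eqP H.
apply: (lin_indep (a := fun k => E i k) _ H) => // k.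
by case: (Qsize k).
Qed.

End Poly.

Unset Implicit Arguments.
Theorem theorem3p3 (R : numFieldType) (c2 c3 : R)
    (P : nat -> {poly R}) (beta gamma : nat -> R)
    (Q : nat -> {poly R}) (beta' gamma' : nat -> R) :
  monic_orth_with P beta gamma ->
  (forall n, DDrel c2 c3 (P n.+1) (n.+1%:R *: Q n)) ->
  ttrr Q beta' gamma' ->
  (classical c2 c3 P <->
   forall i j, main_expr c2 c3 (jacobi beta gamma) (jacobi beta' gamma') i j = 0).
Proof.
move=> hP hDD hQ; split.
  by move=> _ i j; apply: (Eall hP hDD hQ).
move=> HE; exists Q; split => //; exists beta', gamma'; split.
- exact: (Q0 hP hDD).
- by move=> n; case: (Qsize hP hDD hQ n).
- exact: hQ.
case=> [//|k] _; apply/eqP => g0.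
have := HE k.+3 k; rewrite entry_low g0 !mulr0 subr0 addr0.
have [_ _ _ gn0] := hP.
move/eqP; rewrite !mulf_eq0 pnatr_eq0 /= (negbTE (gn0 k.+3 _)) // (negbTE (gn0 k.+2 _)) //.
Qed.
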